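(* Under the triangle scaling property, for every $T\ge1$ the generic accelerated Bregman proximal point method satisfies $$d(\lambda^* )-d(\lambda_T)\le\Big[\prod_{k=0}^{T-1}(1-\theta_k)\Big]\big(d(\lambda^* )-d(\lambda_0)+AD_h(\lambda^*,\lambda_0)\big),$$ and $$\frac{1}{\big(1+\sqrt{A/G}\sum_{k=0}^{T-1}\sqrt{\eta_k}\big)^2}\le\prod_{k=0}^{T-1}(1-\theta_k)\le\frac{1}{\big(1+\tfrac12\sqrt{A/G}\sum_{k=0}^{T-1}\sqrt{\eta_k}\big)^2}.$$
   Context: $\Lambda\subseteq\mathbb{R}^m$ closed convex, $d:\Lambda\to\mathbb{R}$ concave with a maximizer $\lambda^*\in\Lambda$. $h$ strictly convex, continuously differentiable on $\Lambda$, $D_h(\lambda,\tilde\lambda)=h(\lambda)-h(\tilde\lambda)-\nabla h(\tilde\lambda)^\top(\lambda-\tilde\lambda)$. Triangle scaling property with constant $G>0$: $D_h((1-\theta)\lambda+\theta\lambda_1,(1-\theta)\lambda+\theta\lambda_2)\le G\theta^2D_h(\lambda_1,\lambda_2)$ for all $\lambda,\lambda_1,\lambda_2\in\Lambda$, $\theta\in[0,1]$. Generic accelerated BPP (acc-BPP): given $\lambda_0\in\Lambda$, $v_0=\lambda_0$, $A_0=A>0$, $\eta_k>0$, set $\phi_0(\lambda)=d(\lambda_0)-AD_h(\lambda,\lambda_0)$, and for $k\ge0$: $\theta_k\in(0,1)$ is the positive root of $\theta^2=\eta_kA_k(1-\theta)/G$, i.e. $\theta_k=\frac{\sqrt{(A_k\eta_k/G)^2+4A_k\eta_k/G}-A_k\eta_k/G}{2}$;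 $y_k=\theta_kv_k+(1-\theta_k)\lambda_k$; $\lambda_{k+1}\in\arg\max_{\lambda\in\Lambda}\{d(\lambda)-\frac1{\eta_k}D_h(\lambda,y_k)\}$; $A_{k+1}=(1-\theta_k)A_k$; $\phi_{k+1}(\lambda)=(1-\theta_k)\phi_k(\lambda)+\theta_k\big(d(\lambda_{k+1})+\frac1{\eta_k}(\nabla h(\lambda_{k+1})-\nabla h(y_k))^\top(\lambda-\lambda_{k+1})\big)$; $v_{k+1}\in\arg\max_{\lambda\in\Lambda}\phi_{k+1}(\lambda)$. All maximizers are assumed to exist. *)

(* Defs.v *)
From Stdlib Require Import Reals Lra.
From Stdlib Require Vectors.Fin.
Open Scope R_scope.

Definition vec (m : nat) := Fin.t m -> R.

Fixpoint sumF (m : nat) : (Fin.t m -> R) -> R :=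
  match m return (Fin.t m -> R) -> R with
  | O => fun _ => 0
  | S n => fun f => f Fin.F1 + sumF n (fun i => f (Fin.FS i))
  end.

Definition dot {m} (x y : vec m) : R := sumF m (fun i => x i * y i).
Definition vadd {m} (x y : vec m) : vec m := fun i => x i + y i.
Definition vsub {m} (x y : vec m) : vec m := fun i => x i - y i.
Definition vscal {m} (a : R) (x : vec m) : vec m := fun i => a * x i.
Definition vnorm {m} (x : vec m) : R := sqrt (dot x x).

Definition vcomb {m} (t : R) (x y : vec m) : vec m :=
  fun i => (1 - t) * x i + t * y i.

Definition vconvex_set {m} (L : vec m -> Prop) : Prop :=
  forall x y t, L x -> L y -> 0 <= t <= 1 -> L (vcomb t x y).

Definition vclosed_set {m} (L : vec m -> Prop) : Prop :=
  forall x, (forall eps, 0 < eps -> exists y, L y /\ vnorm (vsub y x) < eps) -> L x.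

Definition concave_on {m} (L : vec m -> Prop) (f : vec m -> R) : Prop :=
  forall x y t, L x -> L y -> 0 <= t <= 1 ->
    (1 - t) * f x + t * f y <= f (vcomb t x y).

Definition strictly_convex_on {m} (L : vec m -> Prop) (f : vec m -> R) : Prop :=
  forall x y t, L x -> L y -> x <> y -> 0 < t < 1 ->
    f (vcomb t x y) < (1 - t) * f x + t * f y.

Definition has_gradient_at {m} (f : vec m -> R) (x g : vec m) : Prop :=
  forall eps, 0 < eps -> exists delta, 0 < delta /\
    forall y, vnorm (vsub y x) < delta ->
      Rabs (f y - f x - dot g (vsub y x)) <= eps * vnorm (vsub y x).

Definition continuous_on_vec {m} (L : vec m -> Prop) (F : vec m -> vec m) : Prop :=
  forall x, L x -> forall eps, 0 < eps -> exists delta, 0 < delta /\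
    forall y, L y -> vnorm (vsub y x) < delta -> vnorm (vsub (F y) (F x)) < eps.

Definition C1_on {m} (L : vec m -> Prop) (h : vec m -> R) (gh : vec m -> vec m) : Prop :=
  (forall x, L x -> has_gradient_at h x (gh x)) /\ continuous_on_vec L gh.

Definition Dh {m} (h : vec m -> R) (gh : vec m -> vec m) (l lt : vec m) : R :=
  h l - h lt - dot (gh lt) (vsub l lt).

Definition is_argmax {m} (L : vec m -> Prop) (f : vec m -> R) (x : vec m) : Prop :=
  L x /\ forall y, L y -> f y <= f x.

Definition triangle_scaling {m} (L : vec m -> Prop) (h : vec m -> R)
  (gh : vec m -> vec m) (G : R) : Prop :=
  forall l l1 l2 t, L l -> L l1 -> L l2 -> 0 <= t <= 1 ->
    Dh h gh (vcomb t l l1) (vcomb t l l2) <= G * t ^ 2 * Dh h gh l1 l2.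

Fixpoint prod_upto (a : nat -> R) (T : nat) : R :=
  match T with O => 1 | S n => prod_upto a n * a n end.
Fixpoint sum_upto (a : nat -> R) (T : nat) : R :=
  match T with O => 0 | S n => sum_upto a n + a n end.

(* Main.v *)
Require Import Defs.
From Stdlib Require Import Reals Lra Psatz Classical FunctionalExtensionality.
Open Scope R_scope.

Lemma sumF_ext : forall m (f g : Fin.t m -> R), (forall i, f i = g i) -> sumF m f = sumF m g.
Proof. induction m; intros f g H; simpl; [reflexivity|].
  rewrite H. f_equal. apply IHm. intros; apply H. Qed.
Lemma sumF_plus : forall m (f g : Fin.t m -> R), sumF m (fun i => f i + g i) = sumF m f + sumF m g.
Proof. induction m; intros f g; simpl; [ring|].
  rewrite (IHm (fun i => f (Fin.FS i)) (fun i => g (Fin.FS i))). ring. Qed.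
Lemma sumF_scal : forall m c (f : Fin.t m -> R), sumF m (fun i => c * f i) = c * sumF m f.
Proof. induction m; intros c f; simpl; [ring|].
  rewrite (IHm c (fun i => f (Fin.FS i))). ring. Qed.
Lemma sumF_nonneg : forall m (f : Fin.t m -> R), (forall i, 0 <= f i) -> 0 <= sumF m f.
Proof. induction m; intros f H; simpl; [lra|].
  pose proof (H Fin.F1). pose proof (IHm (fun i => f (Fin.FS i)) (fun i => H _)). lra. Qed.

Lemma dot_sub_r {m} (a x y : vec m) : dot a (vsub x y) = dot a x - dot a y.
Proof. unfold dot, vsub.
  transitivity (sumF m (fun i => a i * x i + (-1) * (a i * y i))).
  apply sumF_ext; intros; ring. rewrite sumF_plus, sumF_scal; ring. Qed.
Lemma dot_sub_l {m} (a b x : vec m) : dot (vsub a b) x = dot a x - dot b x.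
Proof. unfold dot, vsub.
  transitivity (sumF m (fun i => a i * x i + (-1) * (b i * x i))).
  apply sumF_ext; intros; ring. rewrite sumF_plus, sumF_scal; ring. Qed.
Lemma dot_comb_r {m} (a x y : vec m) t : dot a (vcomb t x y) = (1-t) * dot a x + t * dot a y.
Proof. unfold dot, vcomb.
  transitivity (sumF m (fun i => (1-t) * (a i * x i) + t * (a i * y i))).
  apply sumF_ext; intros; ring. rewrite sumF_plus, !sumF_scal; ring. Qed.
Lemma dot_lin_l {m} (a b x : vec m) p q :
  dot (fun i => p * a i + q * b i) x = p * dot a x + q * dot b x.
Proof. unfold dot.
  transitivity (sumF m (fun i => p * (a i * x i) + q * (b i * x i))).
  apply sumF_ext; intros; ring. rewrite sumF_plus, !sumF_scal; ring. Qed.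

Lemma vnorm_comb {m} (x l : vec m) t : 0 <= t ->
  vnorm (vsub (vcomb t x l) x) = t * vnorm (vsub l x).
Proof. intro Ht. unfold vnorm.
  assert (E : dot (vsub (vcomb t x l) x) (vsub (vcomb t x l) x) = (t*t) * dot (vsub l x) (vsub l x)).
  { unfold dot. rewrite <- sumF_scal. apply sumF_ext; intros; unfold vsub, vcomb; ring. }
  rewrite E. rewrite sqrt_mult. rewrite sqrt_square; auto. nra.
  unfold dot; apply sumF_nonneg; intros; nra. Qed.

Lemma dir_lemma {m} (h : vec m -> R) (g x l : vec m) c K :
  has_gradient_at h x g ->
  (forall t, 0 < t < 1 -> t * c <= K * (h (vcomb t x l) - h x - dot g (vsub (vcomb t x l) x))) ->
  c <= 0.
Proof.
  intros Hg H. destruct (Rle_dec c 0) as [|Hc]; [auto|]. apply Rnot_le_lt in Hc.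
  set (N := vnorm (vsub l x)).
  assert (HN : 0 <= N) by (unfold N, vnorm; apply sqrt_pos).
  set (eps := c / (2 * (Rabs K + 1) * (N + 1))).
  assert (HK : 0 <= Rabs K) by apply Rabs_pos.
  assert (Heps : 0 < eps) by (unfold eps; apply Rdiv_lt_0_compat; nra).
  destruct (Hg eps Heps) as [del [Hdel Hd]].
  set (t := / 2 * Rmin 1 (del / (N + 1))).
  assert (Hm1 : Rmin 1 (del / (N+1)) <= 1) by apply Rmin_l.
  assert (Hm2 : Rmin 1 (del / (N+1)) <= del / (N+1)) by apply Rmin_r.
  assert (Hm0 : 0 < Rmin 1 (del / (N+1))).
  { apply Rmin_pos; [lra| apply Rdiv_lt_0_compat; lra]. }
  assert (Ht : 0 < t < 1) by (unfold t; lra).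
  assert (HtN : t * N < del).
  { assert (Rmin 1 (del / (N+1)) * (N+1) <= del).
    { replace del with ((del/(N+1)) * (N+1)) at 2 by (field; lra).
      apply Rmult_le_compat_r; lra. }
    unfold t. nra. }
  specialize (H t Ht).
  assert (HtN' : vnorm (vsub (vcomb t x l) x) < del) by (rewrite vnorm_comb; [exact HtN| lra]).
  specialize (Hd _ HtN'). rewrite vnorm_comb in Hd by lra. fold N in Hd.
  set (E := h (vcomb t x l) - h x - dot g (vsub (vcomb t x l) x)) in *.
  assert (K * E <= Rabs K * Rabs E).
  { rewrite <- Rabs_mult. apply Rle_abs. }
  assert (Rabs K * Rabs E <= Rabs K * (eps * (t * N))) by (apply Rmult_le_compat_l; auto).
  assert (Heq : eps * (2 * (Rabs K + 1) * (N + 1)) = c) by (unfold eps; field; nra).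
  assert (Rabs K * (eps * (t*N)) < t * c).
  { rewrite <- Heq. assert (0 < t * eps) by nra. nra. }
  lra.
Qed.

Lemma Dh_self {m} h (gh : vec m -> vec m) x : Dh h gh x x = 0.
Proof. unfold Dh. rewrite dot_sub_r. ring. Qed.

Lemma Dh_nonneg {m} (L : vec m -> Prop) h gh x l :
  vconvex_set L -> strictly_convex_on L h -> C1_on L h gh -> L x -> L l ->
  0 <= Dh h gh l x.
Proof.
  intros Hc Hs [Hg _] Hx Hl.
  destruct (classic (l = x)) as [->|Hne]. rewrite Dh_self; lra.
  assert (-(Dh h gh l x) <= 0); [|lra].
  apply (dir_lemma h (gh x) x l _ (-1) (Hg x Hx)).
  intros t Ht. pose proof (Hs x l t Hx Hl (fun e => Hne (eq_sym e)) Ht).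
  unfold Dh. rewrite !dot_sub_r, dot_comb_r. nra.
Qed.

Lemma opt_affine {m} (L : vec m -> Prop) h gh F c g a v :
  vconvex_set L -> C1_on L h gh -> is_argmax L F v ->
  (forall l, F l = c + dot g l - a * h l) ->
  forall l, L l -> F l <= F v - a * Dh h gh l v.
Proof.
  intros Hc [Hg _] [Hv Hmax] HF l Hl.
  assert (dot g l - dot g v - a * (dot (gh v) l - dot (gh v) v) <= 0).
  { apply (dir_lemma h (gh v) v l _ a (Hg v Hv)).
    intros t Ht. assert (Hz := Hmax _ (Hc v l t Hv Hl (conj (Rlt_le _ _ (proj1 Ht)) (Rlt_le _ _ (proj2 Ht))))).
    rewrite !HF in Hz. rewrite dot_comb_r in Hz. rewrite dot_sub_r, dot_comb_r. nra. }
  rewrite !HF. unfold Dh. rewrite dot_sub_r. nra.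
Qed.

Lemma ell_upper {m} (L : vec m -> Prop) h gh d e yy lp :
  vconvex_set L -> C1_on L h gh -> concave_on L d ->
  is_argmax L (fun l => d l - e * Dh h gh l yy) lp ->
  forall l, L l -> d l <= d lp + e * dot (vsub (gh lp) (gh yy)) (vsub l lp).
Proof.
  intros Hc [Hg _] Hcc [Hp Hmax] l Hl.
  assert (d l - d lp - e * (dot (gh lp) l - dot (gh lp) lp - dot (gh yy) l + dot (gh yy) lp) <= 0).
  { apply (dir_lemma h (gh lp) lp l _ e (Hg lp Hp)).
    intros t Ht. assert (Ht' : 0 <= t <= 1) by lra.
    assert (Hz := Hmax _ (Hc lp l t Hp Hl Ht')). simpl in Hz.
    pose proof (Hcc lp l t Hp Hl Ht').
    unfold Dh in Hz. rewrite !dot_sub_r, dot_comb_r in Hz. rewrite dot_sub_r, dot_comb_r. nra. }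
  rewrite dot_sub_l, !dot_sub_r. nra.
Qed.

Lemma theta_props a : 0 < a ->
  0 < (sqrt (a^2 + 4*a) - a)/2 < 1 /\
  ((sqrt (a^2 + 4*a) - a)/2)^2 = a * (1 - (sqrt (a^2 + 4*a) - a)/2).
Proof.
  intro Ha. assert (Hp : 0 <= a^2 + 4*a) by nra.
  pose proof (sqrt_sqrt _ Hp) as Hs. pose proof (sqrt_pos (a^2+4*a)).
  set (s := sqrt (a^2+4*a)) in *.
  split; [split|]; nra.
Qed.

Theorem mainTheorem6 (m : nat) (L : vec m -> Prop) (d h : vec m -> R)
  (gh : vec m -> vec m) (lstar : vec m) (G A : R)
  (eta theta Aseq : nat -> R) (lam v y : nat -> vec m) (phi : nat -> vec m -> R) :
  vclosed_set L -> vconvex_set L ->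
  concave_on L d -> is_argmax L d lstar ->
  strictly_convex_on L h -> C1_on L h gh ->
  0 < G -> triangle_scaling L h gh G ->
  0 < A -> (forall k, 0 < eta k) ->
  L (lam 0%nat) -> v 0%nat = lam 0%nat -> Aseq 0%nat = A ->
  (forall l, phi 0%nat l = d (lam 0%nat) - A * Dh h gh l (lam 0%nat)) ->
  (forall k, theta k =
      (sqrt ((Aseq k * eta k / G) ^ 2 + 4 * Aseq k * eta k / G) - Aseq k * eta k / G) / 2) ->
  (forall k, y k = (fun i => theta k * v k i + (1 - theta k) * lam k i)) ->
  (forall k, is_argmax L (fun l => d l - / eta k * Dh h gh l (y k)) (lam (S k))) ->
  (forall k, Aseq (S k) = (1 - theta k) * Aseq k) ->
  (forall k l, phi (S k) l = (1 - theta k) * phi k l +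
      theta k * (d (lam (S k)) +
        / eta k * dot (vsub (gh (lam (S k))) (gh (y k))) (vsub l (lam (S k))))) ->
  (forall k, is_argmax L (phi (S k)) (v (S k))) ->
  forall T : nat, (1 <= T)%nat ->
    d lstar - d (lam T) <=
      prod_upto (fun k => 1 - theta k) T *
        (d lstar - d (lam 0%nat) + A * Dh h gh lstar (lam 0%nat))
    /\ 1 / (1 + sqrt (A / G) * sum_upto (fun k => sqrt (eta k)) T) ^ 2
         <= prod_upto (fun k => 1 - theta k) T
    /\ prod_upto (fun k => 1 - theta k) T
         <= 1 / (1 + / 2 * sqrt (A / G) * sum_upto (fun k => sqrt (eta k)) T) ^ 2.
Proof.
  intros Hcl Hcv Hcc Hstar Hsc HC1 HG Hts HA Heta Hl0 Hv0 HA0 Hphi0 Hth Hy Hlam HAS Hphi Hv T HT.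
  set (P := prod_upto (fun k => 1 - theta k)).
  assert (HLam : forall k, L (lam k)) by (intros [|k]; [auto| apply (proj1 (Hlam k))]).
  assert (HVv : forall k, L (v k)) by (intros [|k]; [rewrite Hv0; auto| apply (proj1 (Hv k))]).
  assert (Hthk : forall k, 0 < Aseq k -> 0 < theta k < 1 /\
            theta k ^ 2 = (Aseq k * eta k / G) * (1 - theta k)).
  { intros k Hk. rewrite Hth.
    replace (4 * Aseq k * eta k / G) with (4 * (Aseq k * eta k / G)) by (field; lra).
    apply theta_props. apply Rdiv_lt_0_compat; [|lra]. pose proof (Heta k); nra. }
  assert (HAk : forall k, 0 < Aseq k /\ Aseq k = A * P k).
  { induction k. rewrite HA0; unfold P; simpl; split; lra.
    destruct IHk as [H1 H2]. destruct (Hthk k H1) as [H3 _].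
    rewrite HAS. unfold P; simpl prod_upto; fold P. rewrite H2. split; nra. }
  assert (HTk : forall k, 0 < theta k < 1 /\ theta k ^ 2 = (Aseq k * eta k / G) * (1 - theta k))
    by (intro k; apply Hthk, HAk).
  assert (Hyc : forall k, y k = vcomb (theta k) (lam k) (v k)).
  { intro k. rewrite Hy. apply functional_extensionality; intro i; unfold vcomb; ring. }
  assert (Haff : forall k, exists c g, forall l, phi k l = c + dot g l - Aseq k * h l).
  { induction k.
    - exists (d (lam 0%nat) + A * h (lam 0%nat) - A * dot (gh (lam 0%nat)) (lam 0%nat)),
        (fun i => A * gh (lam 0%nat) i + 0 * gh (lam 0%nat) i).
      intro l. rewrite Hphi0, HA0, dot_lin_l. unfold Dh. rewrite dot_sub_r. ring.
    - destruct IHk as [c [g Hg]].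
      set (w := vsub (gh (lam (S k))) (gh (y k))).
      exists ((1 - theta k) * c + theta k * d (lam (S k)) - theta k * / eta k * dot w (lam (S k))),
        (fun i => (1 - theta k) * g i + (theta k * / eta k) * w i).
      intro l. rewrite Hphi, Hg, HAS, dot_lin_l. fold w. rewrite dot_sub_r. ring. }
  assert (Hell : forall k l, L l -> d l <= d (lam (S k)) +
            / eta k * dot (vsub (gh (lam (S k))) (gh (y k))) (vsub l (lam (S k)))).
  { intros k. apply (ell_upper L h gh d _ _ _ Hcv HC1 Hcc (Hlam k)). }
  assert (I2 : forall k l, L l -> (1 - P k) * d l + P k * phi 0%nat l <= phi k l).
  { induction k; intros l Hl.
    - unfold P; simpl. lra.
    - rewrite Hphi. unfold P; simpl prod_upto; fold P.
      specialize (IHk l Hl). specialize (Hell k l Hl). destruct (HTk k) as [[Ht1 Ht2] _].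
      set (ell := d (lam (S k)) + / eta k * dot (vsub (gh (lam (S k))) (gh (y k))) (vsub l (lam (S k)))) in *.
      assert ((1 - theta k) * ((1 - P k) * d l + P k * phi 0%nat l) <= (1 - theta k) * phi k l)
        by (apply Rmult_le_compat_l; lra).
      assert (theta k * d l <= theta k * ell) by (apply Rmult_le_compat_l; lra).
      nra. }
  assert (I3 : forall k l, L l -> phi k l <= d (lam k) - Aseq k * Dh h gh l (v k)).
  { induction k; intros l Hl.
    - rewrite Hphi0, HA0, Hv0; lra.
    - assert (Hup : forall l, L l -> phi (S k) l <= d (lam (S k))).
      { clear l Hl. intros l Hl. rewrite Hphi.
        destruct (HTk k) as [[Ht1 Ht2] Hsq].
        pose proof (IHk l Hl) as H1.
        pose proof (Hell k (lam k) (HLam k)) as H2.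
        set (w := vsub (gh (lam (S k))) (gh (y k))) in *.
        set (lp := lam (S k)) in *.
        set (z := vcomb (theta k) (lam k) l).
        assert (Hz : L z) by (apply Hcv; auto; lra).
        assert (Hyl : L (y k)) by (rewrite Hyc; apply Hcv; auto; lra).
        assert (E1 : dot w (vsub z lp) = Dh h gh z (y k) - Dh h gh z lp - Dh h gh lp (y k)).
        { unfold w, Dh. rewrite dot_sub_l, !dot_sub_r. ring. }
        assert (E2 : (1 - theta k) * dot w (vsub (lam k) lp) + theta k * dot w (vsub l lp)
                     = dot w (vsub z lp)).
        { unfold z. rewrite !dot_sub_r, dot_comb_r. ring. }
        assert (D1 : 0 <= Dh h gh z lp) by (apply (Dh_nonneg L); auto; apply (proj1 (Hlam k))).
        assert (D2 : 0 <= Dh h gh lp (y k)) by (apply (Dh_nonneg L); auto; apply (proj1 (Hlam k))).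
        assert (D3 : Dh h gh z (y k) <= G * theta k ^ 2 * Dh h gh l (v k)).
        { rewrite Hyc. unfold z. apply Hts; auto; lra. }
        assert (E3 : / eta k * (G * theta k ^ 2) = (1 - theta k) * Aseq k).
        { rewrite Hsq. pose proof (Heta k). field. split; lra. }
        assert (He : 0 < / eta k) by (apply Rinv_0_lt_compat, Heta).
        assert (F1 : (1 - theta k) * phi k l <= (1 - theta k) * (d (lam k) - Aseq k * Dh h gh l (v k)))
          by (apply Rmult_le_compat_l; lra).
        assert (F2 : (1 - theta k) * d (lam k) <= (1 - theta k) * (d lp + / eta k * dot w (vsub (lam k) lp)))
          by (apply Rmult_le_compat_l; lra).
        assert (F3 : / eta k * Dh h gh z (y k) <= / eta k * (G * theta k ^ 2 * Dh h gh l (v k)))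
          by (apply Rmult_le_compat_l; lra).
        assert (F4 : 0 <= / eta k * (Dh h gh z lp + Dh h gh lp (y k))) by (apply Rmult_le_pos; lra).
        assert (F5 : / eta k * (G * theta k ^ 2 * Dh h gh l (v k)) = (1 - theta k) * Aseq k * Dh h gh l (v k)).
        { rewrite <- E3. ring. }
        assert (F6 : (1 - theta k) * (/ eta k * dot w (vsub (lam k) lp)) + theta k * (/ eta k * dot w (vsub l lp))
                    = / eta k * (Dh h gh z (y k) - Dh h gh z lp - Dh h gh lp (y k))).
        { rewrite <- E1, <- E2. ring. }
        nra. }
      destruct (Haff (S k)) as [c [g Hg]].
      pose proof (opt_affine L h gh (phi (S k)) c g (Aseq (S k)) (v (S k)) Hcv HC1 (Hv k) Hg l Hl).
      pose proof (Hup (v (S k)) (HVv (S k))). lra. }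
  split.
  - pose proof (I2 T lstar (proj1 Hstar)) as H1.
    pose proof (I3 T lstar (proj1 Hstar)) as H2.
    rewrite Hphi0 in H1.
    assert (0 <= Aseq T * Dh h gh lstar (v T)).
    { apply Rmult_le_pos; [apply Rlt_le, HAk|]. apply (Dh_nonneg L); auto. apply Hstar. }
    fold P. nra.
  -
    set (S := fun k => sqrt (A / G) * sum_upto (fun k => sqrt (eta k)) k).
    assert (HB : forall k, 0 < P k /\ 1 + / 2 * S k <= / sqrt (P k) <= 1 + S k).
    { induction k.
      - unfold P, S; simpl. rewrite sqrt_1. split; [lra|]. rewrite Rinv_1. split; lra.
      - destruct IHk as [HP [HB1 HB2]].
        destruct (HTk k) as [[Ht1 Ht2] Hsq].
        destruct (HAk k) as [HAk1 HAk2].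
        assert (HP' : P (Datatypes.S k) = P k * (1 - theta k)) by reflexivity.
        set (u := sqrt (P k)) in *. set (s := sqrt (1 - theta k)).
        set (c := sqrt (A / G) * sqrt (eta k)).
        assert (Hu : 0 < u) by (apply sqrt_lt_R0; auto).
        assert (Hs : 0 < s) by (apply sqrt_lt_R0; lra).
        assert (Hu2 : u * u = P k) by (apply sqrt_sqrt; lra).
        assert (Hs2 : s * s = 1 - theta k) by (apply sqrt_sqrt; lra).
        assert (Hc0 : 0 <= c) by (apply Rmult_le_pos; apply sqrt_pos).
        assert (Hc2 : c * c = A / G * eta k).
        { unfold c. replace (sqrt (A / G) * sqrt (eta k) * (sqrt (A / G) * sqrt (eta k)))
            with ((sqrt (A/G) * sqrt (A/G)) * (sqrt (eta k) * sqrt (eta k))) by ring.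
          rewrite !sqrt_sqrt; [ring| apply Rlt_le, Heta| apply Rlt_le, Rdiv_lt_0_compat; lra]. }
        assert (Hth2 : theta k ^ 2 = (u * c * s) ^ 2).
        { rewrite Hsq, HAk2. replace ((u*c*s)^2) with ((u*u)*(c*c)*(s*s)) by ring.
          rewrite Hu2, Hc2, Hs2. field. lra. }
        assert (Hucs : 0 <= u * c * s) by (apply Rmult_le_pos; [apply Rmult_le_pos|]; lra).
        assert (Hteq : theta k = u * c * s).
        { assert ((theta k - u*c*s) * (theta k + u*c*s) = 0) by nra.
          apply Rmult_integral in H. destruct H; lra. }
        assert (Hs1 : s < 1) by nra.
        assert (Hsq' : sqrt (P (Datatypes.S k)) = u * s).
        { rewrite HP'. apply sqrt_mult; lra. }
        assert (HSS : S (Datatypes.S k) = S k + c) by (unfold S, c; simpl; ring).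
        rewrite Hsq', HSS.
        assert (Hinv : / (u * s) = / u + c / (1 + s)).
        { field_simplify_eq; try lra. }
        rewrite Hinv.
        assert (Hq : c / (1 + s) * (1 + s) = c) by (field; lra).
        assert (Hq0 : 0 <= c / (1 + s)) by (unfold Rdiv; apply Rmult_le_pos; [lra| apply Rlt_le, Rinv_0_lt_compat; lra]).
        split; [rewrite HP'; nra|].
        set (q := c / (1 + s)) in *.
        assert (q * s <= q) by nra. assert (0 <= q * s) by nra. split; lra. }
    destruct (HB T) as [HP [HB1 HB2]].
    set (u := sqrt (P T)) in *.
    assert (Hu : 0 < u) by (apply sqrt_lt_R0; auto).
    assert (Hu2 : u * u = P T) by (apply sqrt_sqrt; lra).
    assert (Hur : u * / u = 1) by (field; lra).
    fold P. change (sqrt (A / G) * sum_upto (fun k => sqrt (eta k)) T) with (S T).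
    replace (/ 2 * sqrt (A / G) * sum_upto (fun k => sqrt (eta k)) T) with (/ 2 * S T) by (unfold S; ring).
    assert (Hiu : 0 < / u) by (apply Rinv_0_lt_compat; lra).
    split.
    + assert (HX : 0 < (1 + S T) ^ 2) by nra.
      apply (Rmult_le_reg_r ((1 + S T) ^ 2)); auto.
      unfold Rdiv. rewrite Rmult_1_l, Rinv_l by lra.
      assert (1 <= u * (1 + S T)) by nra. nra.
    + assert (HX : 0 < (1 + / 2 * S T) ^ 2) by nra.
      apply (Rmult_le_reg_r ((1 + / 2 * S T) ^ 2)); auto.
      unfold Rdiv. rewrite Rmult_1_l, Rinv_l by lra.
      assert (u * (1 + / 2 * S T) <= 1) by nra.
      assert (0 <= u * (1 + / 2 * S T)) by nra. nra.
Qed.
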